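(* Let $n_1,n_2,n_3$ be pairwise coprime positive integers forming a minimal system of generators of $\mathcal S=\langle n_1,n_2,n_3\rangle$, and let $\{i,j,k\}=\{1,2,3\}$. Put $\lambda_{ij}=[-n_in_j^{-1}]_{n_k}$ and $\lambda_{ik}=[-n_in_k^{-1}]_{n_j}$. If $\lambda_{ij}<\frac{n_k}{2}$ and $\lambda_{ik}<\frac{n_j}{2}$, then $c_k=n_j-\lambda_{ik}$ and $c_j=n_k-\lambda_{ij}$.
   Context: $\mathbb N$ denotes the nonnegative integers. For integers $a_1,\dots,a_r$, $\langle a_1,\dots,a_r\rangle=\{\sum t_la_l: t_l\in\mathbb N\}$. Minimal system of generators means that no $n_l$ belongs to the monoid generated by the other two. For an integer $m$ and $n\ge 1$, $[m]_n\in\{0,\dots,n-1\}$ denotes the remainder of $m$ upon division by $n$; for $a$ coprime to $n$, the symbol $a^{-1}$ inside $[\cdot]_n$ denotes a multiplicative inverse of $a$ modulo $n$. For $\{i,j,k\}=\{1,2,3\}$, $\mathcal S_k=\{M\in\mathbb N: Mn_k\in\langle n_i,n_j\rangle\}$ and $c_k=\min(\mathcal S_k\setminus\{0\})$ (the minimal relation for $n_k$); $c_j$ is defined analogously with $\mathcal S_j=\{M\in\mathbb N: Mn_j\in\langle n_i,n_k\rangle\}$. *)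

(* Defs.v *)
From mathcomp Require Import all_boot.
Set Implicit Arguments. Unset Strict Implicit. Unset Printing Implicit Defensive.

Definition in_mon2 (a b m : nat) : Prop := exists t u, m = t * a + u * b.

(* [m]_n is m %% n ; [-m]_n is the remainder of -m upon division by n *)
Definition negrem (m n : nat) : nat := (n - m %% n) %% n.

(* a multiplicative inverse of a modulo n (the least one in {0..n-1}); any
   inverse gives the same remainders below *)
Definition invmod (a n : nat) : nat :=
  nth 0 [seq x <- iota 0 n | a * x %% n == 1 %% n] 0.

Definition lam (a b n : nat) : nat := negrem (a * invmod b n) n.

Definition inS (ni nj nk M : nat) : Prop := in_mon2 ni nj (M * nk).

Definition is_minrel (ni nj nk c : nat) : Prop :=
  0 < c /\ inS ni nj nk c /\ (forall M, 0 < M -> inS ni nj nk M -> c <= M).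

(* Main.v *)
Require Import Defs.
From mathcomp Require Import all_boot zify.

Lemma invmodP b c : 0 < c -> 0 < b -> coprime b c -> b * invmod b c %% c = 1 %% c.
Proof.
move=> c0 b0 cop.
case: (egcdnP c b0) => km kn E _.
rewrite (eqP cop) in E.
set p := (fun x => b * x %% c == 1 %% c).
have hx : km %% c \in [seq x <- iota 0 c | p x].
  rewrite mem_filter /p mem_iota add0n.
  rewrite ltn_mod c0 andbT /= modnMmr mulnC E modnMDl eqxx //.
have : 0 < size [seq x <- iota 0 c | p x] by move: hx; case: (filter _ _).
move=> /(mem_nth 0); rewrite mem_filter => /andP[/eqP H _].
exact H.
Qed.

Lemma lamP a b c : 0 < c -> 0 < b -> coprime b c ->
  lam a b c < c /\ c %| a + lam a b c * b.
Proof.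
move=> c0 b0 cop; split; first by rewrite /lam /negrem ltn_mod.
have Hi := @invmodP b c c0 b0 cop.
rewrite /lam /negrem.
set y := a * invmod b c %% c.
have yc : y < c by rewrite ltn_mod.
rewrite /dvdn -modnDmr modnMml modnDmr.
have H1 : (a + (c - y) * b) + y * b = a + c * b by rewrite -addnA -mulnDl subnK // ltnW.
have H2 : y * b = a %[mod c].
  by rewrite /y modnMml -mulnA (mulnC _ b) -modnMmr Hi modnMmr muln1.
have H3 : (a + (c - y) * b) + y * b = 0 + y*b %[mod c].
  by rewrite H1 -modnDmr [c * b]mulnC modnMl addn0 add0n H2.
by move/eqP: H3; rewrite eqn_modDr mod0n.
Qed.

Lemma ident a b c l m : 0 < a -> 0 < b -> 0 < c -> coprime b c ->
  ~ in_mon2 b c a -> l < c -> m < b -> c %| a + l * b -> b %| a + m * c ->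
  a + l * b + m * c = b * c.
Proof.
move=> a0 b0 c0 cop nm lc mb H1 H2.
have : b * c %| a + l * b + m * c.
  rewrite Gauss_dvd // ; apply/andP; split.
    by rewrite addnAC dvdn_addr // dvdn_mull.
  by rewrite dvdn_addr // dvdn_mull.
case/dvdnP => k E.
case: k E => [|[|k]] E; first by lia.
  by rewrite E mul1n.
exfalso; apply: nm; exists (c - l), ((k.+1) * b - m).
have Hm : m <= k.+1 * b by nia.
rewrite mulnBl mulnBl.
nia.
Qed.

Lemma minpart a b c l m : 0 < a -> 0 < b -> 0 < c -> coprime b c ->
  a + l * b + m * c = b * c -> (l.*2 < c) -> (m.*2 < b) ->
  is_minrel a b c (b - m).
Proof.
move=> a0 b0 c0 cop E hl hm.
split; first by lia.
split.
  exists 1, l. rewrite mulnBl. nia.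
move=> M M0 [t [u E1]].
have Hd : b %| M + t * m.
  rewrite -(Gauss_dvdr _ cop).
  rewrite -(dvdn_addl _ (dvdn_mull (t * l) (dvdnn b))).
  have -> : c * (M + t * m) + t * l * b = b * (t * c + u) by nia.
  exact: dvdn_mulr.
case/dvdnP: Hd => r E3.
have E4 : u + t * c = r * c + t * l.
  apply/eqP; rewrite -(eqn_pmul2l b0); apply/eqP; nia.
case: (leqP t r) => tr.
  case: t tr E1 E3 E4 => [|t] tr E1 E3 E4.
    case: r tr E3 E4 => [|r] tr E3 E4; nia.
  nia.
have t1 : 1 <= t by lia.
have h1 : (t - r) * c <= t * l by nia.
have h2 : (t - r).*2 < t by nia.
nia.
Qed.

Theorem mainTheorem7 (n : 'I_3 -> nat) (i j k : 'I_3) :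
  (forall l, 0 < n l) ->
  (forall l m, l != m -> coprime (n l) (n m)) ->
  (* minimal system of generators *)
  (forall l m p, l != m -> m != p -> l != p -> ~ in_mon2 (n m) (n p) (n l)) ->
  i != j -> j != k -> i != k ->
  (lam (n i) (n j) (n k)).*2 < n k ->
  (lam (n i) (n k) (n j)).*2 < n j ->
  is_minrel (n i) (n j) (n k) (n j - lam (n i) (n k) (n j)) /\
  is_minrel (n i) (n k) (n j) (n k - lam (n i) (n j) (n k)).
Proof.
move=> pos cop mg ij jk ik hl hm.
have cjk := cop _ _ jk.
have ckj : coprime (n k) (n j) by rewrite coprime_sym.
have [l1 l2] := @lamP (n i) (n j) (n k) (pos k) (pos j) cjk.
have [m1 m2] := @lamP (n i) (n k) (n j) (pos j) (pos k) ckj.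
have E := @ident (n i) (n j) (n k) _ _ (pos i) (pos j) (pos k) cjk
  (mg _ _ _ ij jk ik) l1 m1 l2 m2.
split.
  exact: minpart (pos i) (pos j) (pos k) cjk E hl hm.
apply: minpart (pos i) (pos k) (pos j) ckj _ hm hl.
lia.
Qed.
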